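(* Let $L\subseteq Q$ be a dense extension of symmetric Leibniz algebras with $\mathrm{ran}(Q)=\mathrm{lan}(Q)=\{0\}$. Suppose that $\mathscr{A}(Q)$ is strong right ideally absorbed into $\mathscr{A}_0$. Then $Q$ is an algebra of quotients of $L$.
   Context: A symmetric Leibniz algebra satisfies both $[x,[y,z]]=[[x,y],z]-[[x,z],y]$ and $[x,[y,z]]=[[x,y],z]+[y,[x,z]]$. $\mathrm{lan}(Q)=\{x\in Q:[x,Q]=0\}$, $\mathrm{ran}(Q)=\{x\in Q:[Q,x]=0\}$. For $x\in Q$, $R_x(u)=[u,x]$, $L_x(u)=[x,u]$. $M(Q)$ is the associative subalgebra of $\mathrm{End}(Q)$ generated by the identity and all $R_x,L_x$; $L$ is dense in $Q$ if the only $\mu\in M(Q)$ with $\mu(L)=\{0\}$ is $\mu=0$. $\mathscr{A}(Q)$ is the associative subalgebra of $\mathrm{End}(Q)$ generated by all $R_x,L_x$ ($x\in Q$), and $\mathscr{A}_0=\{\mu\in\mathscr{A}(Q):\mu(L)\subseteq L\}$. For an associative algebra $S$ with subalgebra $A$, $S$ is strong right ideally absorbed into $A$ if for any $p,q\in S\setminus\{0\}$ there is a two-sided ideal $I$ of $A$ with $\mathrm{lan}_A(I)=\{a\in A: aI=0\}=\{0\}$ such that $pI\ne\{0\}$ or $qI\ne\{0\}$, and both $pI\subseteq A$, $qI\subseteq A$. With $\mathscr{A}_Q(L)$ the associative algebra generated by $R_x,L_y$ ($x,y\in L$), ${}_L(q)=\mathbb{F}q+\{\sum\xi_i(q):\xi_i\in\mathscr{A}_Q(L)\}$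 and $(L:q)=\{x\in L:[x,{}_L(q)]\subseteq L,[{}_L(q),x]\subseteq L\}$; $Q$ is an algebra of quotients of $L$ if for all $p,q\in Q$, $p\ne0$, there is $x\in(L:q)$ with $[x,p]\ne0$ or $y\in(L:q)$ with $[p,y]\ne0$. *)

(* Defs.v *)
From mathcomp Require Import all_boot all_algebra.
Set Implicit Arguments. Unset Strict Implicit. Unset Printing Implicit Defensive.
Import GRing.Theory.
Local Open Scope ring_scope.

Definition bilinear_br (F : fieldType) (Q : lmodType F) (br : Q -> Q -> Q) :=
  (forall (a : F) x y z, br (a *: x + y) z = a *: br x z + br y z) /\
  (forall (a : F) x y z, br z (a *: x + y) = a *: br z x + br z y).

Definition symmetric_leibniz (F : fieldType) (Q : lmodType F) (br : Q -> Q -> Q) :=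
  bilinear_br br /\
  (forall x y z, br x (br y z) = br (br x y) z - br (br x z) y) /\
  (forall x y z, br x (br y z) = br (br x y) z + br y (br x z)).

Definition subalgebra (F : fieldType) (Q : lmodType F) (br : Q -> Q -> Q) (L : Q -> Prop) :=
  L 0 /\ (forall (a : F) x y, L x -> L y -> L (a *: x + y)) /\
  (forall x y, L x -> L y -> L (br x y)).

Definition lan_trivial (F : fieldType) (Q : lmodType F) (br : Q -> Q -> Q) :=
  forall x, (forall y, br x y = 0) -> x = 0.
Definition ran_trivial (F : fieldType) (Q : lmodType F) (br : Q -> Q -> Q) :=
  forall x, (forall y, br y x = 0) -> x = 0.

Definition Rop (F : fieldType) (Q : lmodType F) (br : Q -> Q -> Q) (x : Q) : Q -> Q :=
  fun u => br u x.
Definition Lop (F : fieldType) (Q : lmodType F) (br : Q -> Q -> Q) (x : Q) : Q -> Q :=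
  fun u => br x u.

Inductive gen_alg (F : fieldType) (Q : lmodType F) (G : (Q -> Q) -> Prop) : (Q -> Q) -> Prop :=
  | ga_gen f : G f -> gen_alg G f
  | ga_zero : gen_alg G (fun _ => 0)
  | ga_lin (a : F) f g : gen_alg G f -> gen_alg G g -> gen_alg G (fun u => a *: f u + g u)
  | ga_comp f g : gen_alg G f -> gen_alg G g -> gen_alg G (fun u => f (g u)).

Definition MQ (F : fieldType) (Q : lmodType F) (br : Q -> Q -> Q) : (Q -> Q) -> Prop :=
  gen_alg (fun f => f = id \/ exists x, f = Rop br x \/ f = Lop br x).

Definition AQ (F : fieldType) (Q : lmodType F) (br : Q -> Q -> Q) : (Q -> Q) -> Prop :=
  gen_alg (fun f => exists x, f = Rop br x \/ f = Lop br x).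

Definition AQL (F : fieldType) (Q : lmodType F) (br : Q -> Q -> Q) (L : Q -> Prop) :
  (Q -> Q) -> Prop :=
  gen_alg (fun f => exists x, L x /\ (f = Rop br x \/ f = Lop br x)).

Definition A0 (F : fieldType) (Q : lmodType F) (br : Q -> Q -> Q) (L : Q -> Prop) :
  (Q -> Q) -> Prop :=
  fun mu => AQ br mu /\ (forall u, L u -> L (mu u)).

Definition dense (F : fieldType) (Q : lmodType F) (br : Q -> Q -> Q) (L : Q -> Prop) :=
  forall mu, MQ br mu -> (forall u, L u -> mu u = 0) -> forall u, mu u = 0.

Definition two_sided_ideal (F : fieldType) (Q : lmodType F) (A I : (Q -> Q) -> Prop) :=
  (forall i, I i -> A i) /\ I (fun _ => 0) /\
  (forall (a : F) i j, I i -> I j -> I (fun u => a *: i u + j u)) /\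
  (forall a i, A a -> I i -> I (fun u => a (i u)) /\ I (fun u => i (a u))).

Definition lan_ideal_trivial (F : fieldType) (Q : lmodType F) (A I : (Q -> Q) -> Prop) :=
  forall a, A a -> (forall i, I i -> forall u, a (i u) = 0) -> forall u, a u = 0.

Definition strong_right_ideally_absorbed (F : fieldType) (Q : lmodType F)
  (S A : (Q -> Q) -> Prop) :=
  forall p q, S p -> S q -> ~ (forall u, p u = 0) -> ~ (forall u, q u = 0) ->
  exists I, two_sided_ideal A I /\ lan_ideal_trivial A I /\
    ((exists i, I i /\ exists u, p (i u) <> 0) \/ (exists i, I i /\ exists u, q (i u) <> 0)) /\
    (forall i, I i -> A (fun u => p (i u))) /\ (forall i, I i -> A (fun u => q (i u))).

Fixpoint all_in (T : Type) (P : T -> Prop) (s : seq T) : Prop :=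
  if s is x :: s' then P x /\ all_in P s' else True.

Definition genL (F : fieldType) (Q : lmodType F) (br : Q -> Q -> Q) (L : Q -> Prop) (q : Q) :
  Q -> Prop :=
  fun w => exists (lam : F) (s : seq (Q -> Q)),
    all_in (AQL br L) s /\ w = lam *: q + \sum_(xi <- s) xi q.

Definition Lcolon (F : fieldType) (Q : lmodType F) (br : Q -> Q -> Q) (L : Q -> Prop) (q : Q) :
  Q -> Prop :=
  fun x => L x /\ (forall w, genL br L q w -> L (br x w) /\ L (br w x)).

Definition algebra_of_quotients (F : fieldType) (Q : lmodType F) (br : Q -> Q -> Q)
  (L : Q -> Prop) :=
  forall p q, p <> 0 ->
    (exists x, Lcolon br L q x /\ br x p <> 0) \/ (exists y, Lcolon br L q y /\ br p y <> 0).

(* Main.v *)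
From Stdlib Require Import Classical.
Require Import Defs.
From mathcomp Require Import all_boot all_algebra.
Set Implicit Arguments. Unset Strict Implicit. Unset Printing Implicit Defensive.
Import GRing.Theory.
Local Open Scope ring_scope.

Lemma br0l (F : fieldType) (Q : lmodType F) (br : Q -> Q -> Q) :
  bilinear_br br -> forall z, br 0 z = 0.
Proof.
case=> H1 _ z; have := H1 1 0 0 z; rewrite !scale1r addr0 => E.
have : br 0 z + br 0 z = br 0 z + 0 by rewrite addr0 -E.
by move/addrI.
Qed.

Lemma br0r (F : fieldType) (Q : lmodType F) (br : Q -> Q -> Q) :
  bilinear_br br -> forall z, br z 0 = 0.
Proof.
case=> _ H1 z; have := H1 1 0 0 z; rewrite !scale1r addr0 => E.
have : br z 0 + br z 0 = br z 0 + 0 by rewrite addr0 -E.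
by move/addrI.
Qed.

Lemma brBl (F : fieldType) (Q : lmodType F) (br : Q -> Q -> Q) :
  bilinear_br br -> forall x y z, br (x - y) z = br x z - br y z.
Proof.
move=> B x y z; have [H1 _] := B.
have := H1 1 x (- y) z; rewrite !scale1r => ->.
have := H1 (-1) y 0 z; rewrite addr0 !scaleN1r (br0l B) addr0 => ->.
by [].
Qed.

Lemma subL (F : fieldType) (Q : lmodType F) (br : Q -> Q -> Q) (L : Q -> Prop) :
  subalgebra br L ->
  (forall x y, L x -> L y -> L (x + y)) /\ (forall x, L x -> L (- x)) /\
  (forall x y, L x -> L y -> L (x - y)).
Proof.
case=> L0 [Llin _].
have Ladd : forall x y, L x -> L y -> L (x + y).
  by move=> x y Hx Hy; have := Llin 1 x y Hx Hy; rewrite scale1r.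
have Lopp : forall x, L x -> L (- x).
  by move=> x Hx; have := Llin (-1) x 0 Hx L0; rewrite addr0 scaleN1r.
split=> //; split=> // x y Hx Hy; apply: Ladd => //; exact: Lopp.
Qed.

Lemma anti (F : fieldType) (Q : lmodType F) (br : Q -> Q -> Q) :
  symmetric_leibniz br -> forall x z y, br (br x z) y = - br y (br x z).
Proof.
case=> _ [I1 I2] x z y.
have E : br (br x y) z - br (br x z) y = br (br x y) z + br y (br x z)
  by rewrite -I1 -I2.
move/addrI: E => <-; by rewrite opprK.
Qed.

Lemma gen_alg_mono (F : fieldType) (Q : lmodType F) (G1 G2 : (Q -> Q) -> Prop) :
  (forall f, G1 f -> G2 f) -> forall f, gen_alg G1 f -> gen_alg G2 f.
Proof.
move=> H f; elim=> {f}.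
- by move=> f Hf; apply: ga_gen; apply: H.
- exact: ga_zero.
- by move=> a f g _ Hf _ Hg; apply: ga_lin.
- by move=> f g _ Hf _ Hg; apply: ga_comp.
Qed.

Lemma AQ_MQ (F : fieldType) (Q : lmodType F) (br : Q -> Q -> Q) f :
  AQ br f -> MQ br f.
Proof. by apply: gen_alg_mono => g [x Hx]; right; exists x. Qed.

Lemma AQL_AQ (F : fieldType) (Q : lmodType F) (br : Q -> Q -> Q) L f :
  AQL br L f -> AQ br f.
Proof. by apply: gen_alg_mono => g [x [_ Hx]]; exists x. Qed.

Lemma AQL_pres (F : fieldType) (Q : lmodType F) (br : Q -> Q -> Q) L :
  subalgebra br L -> forall f, AQL br L f -> forall u, L u -> L (f u).
Proof.
move=> S f; elim=> {f}.
- move=> f [c [Lc [->|->]]] u Lu; rewrite /Rop /Lop; by apply S.2.2.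
- by move=> u _; exact: S.1.
- by move=> a f g _ Hf _ Hg u Lu; apply: S.2.1; [apply Hf|apply Hg].
- by move=> f g _ Hf _ Hg u Lu; apply Hf; apply Hg.
Qed.

Definition Sgood (F : fieldType) (Q : lmodType F) (br : Q -> Q -> Q) L q x :=
  L x /\ L (br x q) /\ L (br q x) /\
  forall b, AQL br L b -> L (b x) /\ L (br (b x) q) /\ L (br q (b x)).

Definition Wgood (F : fieldType) (Q : lmodType F) (br : Q -> Q -> Q) L q w :=
  forall x, Sgood br L q x -> L (br x w) /\ L (br w x).

Lemma Sgood_R (F : fieldType) (Q : lmodType F) (br : Q -> Q -> Q) L q a x :
  subalgebra br L -> L a -> Sgood br L q x -> Sgood br L q (br x a).
Proof.
move=> S La [Lx [_ [_ Hb]]].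
have HR : AQL br L (Rop br a) by apply: ga_gen; exists a; split=> //; left.
split; first by apply: S.2.2.
have [_ [H1 H2]] := Hb _ HR; split=> //; split=> // b Hb'.
exact: (Hb _ (ga_comp Hb' HR)).
Qed.

Lemma Sgood_L (F : fieldType) (Q : lmodType F) (br : Q -> Q -> Q) L q a x :
  subalgebra br L -> L a -> Sgood br L q x -> Sgood br L q (br a x).
Proof.
move=> S La [Lx [_ [_ Hb]]].
have HR : AQL br L (Lop br a) by apply: ga_gen; exists a; split=> //; right.
split; first by apply: S.2.2.
have [_ [H1 H2]] := Hb _ HR; split=> //; split=> // b Hb'.
exact: (Hb _ (ga_comp Hb' HR)).
Qed.

Lemma Wgood_AQL (F : fieldType) (Q : lmodType F) (br : Q -> Q -> Q) L q :
  symmetric_leibniz br -> subalgebra br L ->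
  forall f, AQL br L f -> forall w, Wgood br L q w -> Wgood br L q (f w).
Proof.
move=> SL S; have [Ladd [Lopp Lsub]] := subL S.
have B := SL.1; have [I1 I2] := SL.2.
move=> f; elim=> {f}.
- move=> f [c [Lc [->|->]]] w Hw x Sx; rewrite /Rop /Lop.
  + have Hx : L (br x (br w c)).
      rewrite I1; apply: Lsub.
      * by apply: S.2.2 => //; apply: (Hw x Sx).1.
      * exact: (Hw _ (Sgood_R S Lc Sx)).1.
    by split=> //; rewrite (anti SL); apply: Lopp.
  + have Hx : L (br x (br c w)).
      rewrite I1; apply: Lsub.
      * exact: (Hw _ (Sgood_R S Lc Sx)).1.
      * by apply: S.2.2 => //; apply: (Hw x Sx).1.
    by split=> //; rewrite (anti SL); apply: Lopp.
- by move=> w _ x _; rewrite (br0l B) (br0r B); split; exact: S.1.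
- move=> a f g _ Hf _ Hg w Hw x Sx.
  have [Hf1 Hf2] := Hf w Hw x Sx; have [Hg1 Hg2] := Hg w Hw x Sx.
  rewrite B.1 B.2; split; exact: S.2.1.
- by move=> f g _ Hf _ Hg w Hw; apply: Hf; apply: Hg.
Qed.

Lemma Lcolon_of (F : fieldType) (Q : lmodType F) (br : Q -> Q -> Q) L q x :
  symmetric_leibniz br -> subalgebra br L -> Sgood br L q x -> Lcolon br L q x.
Proof.
move=> SL S Sx; have B := SL.1; have [Ladd _] := subL S.
have Wq : Wgood br L q q by move=> y [_ [H1 [H2 _]]].
have W0 : Wgood br L q 0
  by move=> y _; rewrite (br0l B) (br0r B); split; exact: S.1.
have Wlin : forall (a : F) u v, Wgood br L q u -> Wgood br L q v ->
    Wgood br L q (a *: u + v).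
  move=> a u v Hu Hv y Sy; have [? ?] := Hu y Sy; have [? ?] := Hv y Sy.
  rewrite B.1 B.2; split; exact: S.2.1.
split; first exact: Sx.1.
move=> w [lam [s [Hs ->]]].
suff Ws : Wgood br L q (\sum_(xi <- s) xi q) by apply: (Wlin _ _ _ Wq Ws).
elim: s Hs => [|xi s IH] /= Hs; first by rewrite big_nil.
rewrite big_cons; have := Wlin 1 _ _ (Wgood_AQL SL S Hs.1 Wq) (IH Hs.2).
by rewrite scale1r.
Qed.

Lemma dense_ex (F : fieldType) (Q : lmodType F) (br : Q -> Q -> Q) L mu :
  dense br L -> MQ br mu -> ~ (forall u, mu u = 0) -> exists u, L u /\ mu u <> 0.
Proof.
move=> D M N; apply: NNPP => H; apply: N; apply: D => // u Lu.
apply: NNPP => Hu; apply: H; by exists u.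
Qed.

Theorem proposition6p9 (F : fieldType) (Q : lmodType F) (br : Q -> Q -> Q) (L : Q -> Prop) :
  symmetric_leibniz br -> subalgebra br L -> dense br L ->
  ran_trivial br -> lan_trivial br ->
  strong_right_ideally_absorbed (AQ br) (A0 br L) ->
  algebra_of_quotients br L.
Proof.
move=> SL S D Rt Lt Abs p q p0.
have B := SL.1.
have Np : ~ (forall y, br y p = 0) by move=> H; apply: p0; apply: Rt.
have AQR : forall z, AQ br (Rop br z) by move=> z; apply: ga_gen; exists z; left.
have AQLo : forall z, AQ br (Lop br z) by move=> z; apply: ga_gen; exists z; right.
have AQL_A0 : forall b, AQL br L b -> A0 br L b
  by move=> b Hb; split; [exact: AQL_AQ Hb | exact: (AQL_pres S Hb)].
case: (classic (q = 0)) => [q0|qn0].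
  subst q.
  have MR : MQ br (Rop br p) by apply: AQ_MQ.
  have [u [Lu Hu]] := dense_ex D MR Np.
  left; exists u; split=> //; apply: Lcolon_of => //.
  rewrite /Sgood (br0l B) (br0r B); split=> //; split; first exact: S.1.
  split; first exact: S.1.
  move=> b Hb; rewrite (br0l B) (br0r B); split; last by split; exact: S.1.
  exact: AQL_pres Hb _ Lu.
have NqR : ~ (forall y, Rop br q y = 0) by move=> H; apply: qn0; apply: Rt.
have NqL : ~ (forall y, Lop br q y = 0) by move=> H; apply: qn0; apply: Lt.
have [I1 [[I1A0 [_ [_ I1id]]] [_ [Hne [HR1 _]]]]] := Abs _ _ (AQR p) (AQR p) Np Np.
have [i1 [Ii1 [v Hv]]] : exists i, I1 i /\ exists u, Rop br p (i u) <> 0 by case: Hne.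
have [I2 [[I2A0 [_ [_ I2id]]] [Lan2 [_ [HR2 HL2]]]]] :=
  Abs _ _ (AQR q) (AQLo q) NqR NqL.
have Aa := HR1 _ Ii1.
have [i2 [Ii2 [u0 Hu0]]] : exists i2, I2 i2 /\ exists u,
    Rop br p (i1 (i2 u)) <> 0.
  apply: NNPP => H; apply: Hv; apply: (Lan2 _ Aa) => i Ii u.
  apply: NNPP => Hu; apply: H; exists i; split=> //; by exists u.
have A0i1 := I1A0 _ Ii1.
have A0i2 := I2A0 _ Ii2.
have Ij : I2 (fun u => i1 (i2 u)) := (I2id _ _ A0i1 Ii2).1.
have Mj : MQ br (fun u => Rop br p (i1 (i2 u))).
  apply: (ga_comp (f := Rop br p) (g := fun u => i1 (i2 u))).
    exact: AQ_MQ.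
  apply: (ga_comp (f := i1) (g := i2)); apply: AQ_MQ; [exact: A0i1.1|exact: A0i2.1].
have Nj : ~ (forall u, Rop br p (i1 (i2 u)) = 0) by move=> H; apply: Hu0; apply: H.
have [u [Lu Hu]] := dense_ex D Mj Nj.
left; exists (i1 (i2 u)); split=> //; apply: Lcolon_of => //.
have Lj : L (i1 (i2 u)) by apply: A0i1.2; apply: A0i2.2.
split=> //; split; first exact: (HR2 _ Ij).2 _ Lu.
split; first exact: (HL2 _ Ij).2 _ Lu.
move=> b Hb; have Ib : I2 (fun w => b (i1 (i2 w))) := (I2id _ _ (AQL_A0 _ Hb) Ij).1.
split; first exact: (I2A0 _ Ib).2 _ Lu.
split; first exact: (HR2 _ Ib).2 _ Lu.
exact: (HL2 _ Ib).2 _ Lu.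
Qed.
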